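(* Let $G$ be a free nilpotent group of class $d\in\mathbb{N}$ with free generators $g_i=g_{1,i}$, $i=1,\dots,n=\mathrm{rk}(G)$. Then for any $d'<d$ and any polynomial maps $\xi_i\colon G\to\mathbb{R}$, $i=1,\dots,n$, of degree at most $d'$, there is a polynomial map $\xi\colon G\to\mathbb{R}$ of degree at most $d'+1$ such that $\partial_{g_i}\xi=\xi_i$ for all $i$.
   Context: The free nilpotent group of class $d$ on $n$ generators is $F_n/(F_n)_{[d+1]}$ where $F_n$ is the free group and $(\cdot)_{[k]}$ the lower central series. $(\partial_g\xi)(h)=\xi(g^{-1}h)-\xi(h)$; $\xi$ is a polynomial of degree at most $d$ if $\partial_{g_1}\cdots\partial_{g_{d+1}}\xi\equiv0$ for all $g_1,\dots,g_{d+1}\in G$. *)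

(* Defs.v *)
From Stdlib Require Import Reals List Arith.
Open Scope R_scope.

(* A group: left identity and left inverse axioms suffice. *)
Record Group := MkGroup {
  gcar :> Type;
  gmul : gcar -> gcar -> gcar;
  ginv : gcar -> gcar;
  gone : gcar;
  gmulA : forall x y z, gmul x (gmul y z) = gmul (gmul x y) z;
  gmul1l : forall x, gmul gone x = x;
  gmulVl : forall x, gmul (ginv x) x = gone }.

Arguments gmul {G} : rename.
Arguments ginv {G} : rename.
Arguments gone {G} : rename.

Definition is_subgroup (G : Group) (S : G -> Prop) : Prop :=
  S gone /\ (forall x y, S x -> S y -> S (gmul x y)) /\ (forall x, S x -> S (ginv x)).

Definition generated (G : Group) (A : G -> Prop) (x : G) : Prop :=
  forall S : G -> Prop, is_subgroup G S -> (forall y, A y -> S y) -> S x.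

Definition gcomm (G : Group) (x y : G) : G :=
  gmul (gmul (ginv x) (ginv y)) (gmul x y).

(* lower central series: lcs G k = G_[k+1]; G_[1] = G, G_[k+1] = [G, G_[k]] *)
Fixpoint lcs (G : Group) (k : nat) : G -> Prop :=
  match k with
  | O => fun _ => True
  | S k' => generated G (fun z => exists x y, lcs G k' y /\ z = gcomm G x y)
  end.

Definition nilpotent_class_le (G : Group) (d : nat) : Prop :=
  forall x : G, lcs G d x -> x = gone.

Definition is_hom (G H : Group) (f : G -> H) : Prop :=
  forall x y, f (gmul x y) = gmul (f x) (f y).

(* G is the free nilpotent group of class d on the free generators g 0, ..., g (n-1):
   G is nilpotent of class <= d, generated by the g i, and free in the variety of
   nilpotent groups of class <= d with basis (g i)_{i<n} (universal property). *)
Definition is_free_nilpotent (G : Group) (d n : nat) (g : nat -> G) : Prop :=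
  nilpotent_class_le G d /\
  (forall x : G, generated G (fun y => exists i, (i < n)%nat /\ y = g i) x) /\
  (forall (H : Group), nilpotent_class_le H d ->
     forall h : nat -> H, exists f : G -> H,
       is_hom G H f /\ forall i, (i < n)%nat -> f (g i) = h i).

Definition gpartial (G : Group) (g : G) (xi : G -> R) : G -> R :=
  fun h => xi (gmul (ginv g) h) - xi h.

Definition iter_partial (G : Group) (gs : list G) (xi : G -> R) : G -> R :=
  fold_right (fun g f => gpartial G g f) xi gs.

Definition poly_deg_le (G : Group) (k : nat) (xi : G -> R) : Prop :=
  forall gs : list G, length gs = S k -> forall h : G, iter_partial G gs xi h = 0.

(* Main.v *)
Require Import Defs.
From Stdlib Require Import Reals List Arith Lia Lra FunctionalExtensionality ProofIrrelevance.
Open Scope R_scope.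

Lemma mulVr (G : Group) (x : G) : gmul x (ginv x) = gone.
Proof.
  set (y := gmul x (ginv x)).
  assert (H : gmul y y = y).
  { unfold y. rewrite <- gmulA. rewrite (gmulA G (ginv x) x (ginv x)).
    rewrite gmulVl, gmul1l. reflexivity. }
  transitivity (gmul (gmul (ginv y) y) y).
  - rewrite gmulVl, gmul1l; reflexivity.
  - rewrite <- gmulA, H, gmulVl. reflexivity.
Qed.

Lemma mul1r (G : Group) (x : G) : gmul x gone = x.
Proof. rewrite <- (gmulVl G x), gmulA, mulVr, gmul1l. reflexivity. Qed.

Lemma inv_uniq (G : Group) (u v : G) : gmul u v = gone -> u = ginv v.
Proof.
  intro H. rewrite <- (mul1r G u), <- (mulVr G v), gmulA, H, gmul1l. reflexivity.
Qed.

Lemma invinv (G : Group) (x : G) : ginv (ginv x) = x.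
Proof. symmetry. apply inv_uniq. apply mulVr. Qed.

Lemma invM (G : Group) (a b : G) : ginv (gmul a b) = gmul (ginv b) (ginv a).
Proof.
  symmetry. apply inv_uniq.
  rewrite <- gmulA, (gmulA G (ginv a) a b), gmulVl, gmul1l, gmulVl. reflexivity.
Qed.

Lemma inv1 (G : Group) : ginv (@gone G) = gone.
Proof. symmetry. apply inv_uniq. apply gmul1l. Qed.

Lemma c1 (G : Group) (w x : G) : gmul (gmul w (ginv x)) x = w.
Proof. rewrite <- gmulA, gmulVl, mul1r. reflexivity. Qed.
Lemma c2 (G : Group) (w x : G) : gmul (gmul w x) (ginv x) = w.
Proof. rewrite <- gmulA, mulVr, mul1r. reflexivity. Qed.

Global Hint Rewrite invM invinv inv1 gmulA gmulVl mulVr gmul1l mul1r c1 c2 : gdb.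
Ltac gsimp := autorewrite with gdb.

Lemma generated_subgroup (G : Group) (A : G -> Prop) : is_subgroup G (generated G A).
Proof.
  split; [|split].
  - intros S HS _. apply HS.
  - intros x y hx hy S HS HA. apply HS; [apply hx|apply hy]; assumption.
  - intros x hx S HS HA. apply HS. apply hx; assumption.
Qed.

Lemma lcs_subgroup (G : Group) k : is_subgroup G (lcs G k).
Proof.
  destruct k; simpl.
  - split; [|split]; auto.
  - apply generated_subgroup.
Qed.

Lemma hom_one (G H : Group) (f : G -> H) : is_hom G H f -> f gone = gone.
Proof.
  intro Hf. assert (E : gmul (f gone) (f gone) = f gone).
  { rewrite <- Hf, gmul1l. reflexivity. }
  transitivity (gmul (gmul (ginv (f gone)) (f gone)) (f gone)).
  - rewrite gmulVl, gmul1l; reflexivity.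
  - rewrite <- gmulA, E, gmulVl. reflexivity.
Qed.

Lemma hom_inv (G H : Group) (f : G -> H) : is_hom G H f -> forall x, f (ginv x) = ginv (f x).
Proof.
  intros Hf x. apply inv_uniq. rewrite <- Hf, gmulVl. apply hom_one; auto.
Qed.

Definition Dn (G : Group) (m : nat) (f : G -> R) : Prop :=
  forall gs : list G, length gs = m -> forall h : G, iter_partial G gs f h = 0.

Definition T (G : Group) (a : G) (f : G -> R) : G -> R := fun h => f (gmul (ginv a) h).

Lemma iter_app (G : Group) gs (g : G) f :
  iter_partial G (gs ++ g :: nil) f = iter_partial G gs (gpartial G g f).
Proof. unfold iter_partial. rewrite fold_right_app. reflexivity. Qed.

Lemma Dn_S (G : Group) m f : Dn G (S m) f <-> forall g, Dn G m (gpartial G g f).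
Proof.
  split.
  - intros H g gs Hl h. rewrite <- iter_app. apply H.
    rewrite length_app; simpl; lia.
  - intros H gs. induction gs as [|x l _] using rev_ind.
    + simpl; discriminate.
    + intros Hl h. rewrite iter_app. apply H.
      rewrite length_app in Hl; simpl in Hl; lia.
Qed.

Lemma Dn0 (G : Group) f : Dn G 0 f <-> forall h, f h = 0.
Proof.
  split.
  - intros H h. apply (H nil eq_refl).
  - intros H gs Hl h. destruct gs; [apply H | discriminate].
Qed.

Lemma Dn_zero (G : Group) m : Dn G m (fun _ => 0).
Proof.
  induction m.
  - apply Dn0; auto.
  - apply Dn_S. intro g.
    replace (gpartial G g (fun _ => 0)) with (fun _ : G => 0); auto.
    apply functional_extensionality; intro; unfold gpartial; ring.
Qed.

Lemma Dn_add (G : Group) m f e : Dn G m f -> Dn G m e -> Dn G m (fun h => f h + e h).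
Proof.
  revert f e; induction m; intros f e Hf He.
  - apply Dn0. intro h. rewrite (proj1 (Dn0 G f) Hf), (proj1 (Dn0 G e) He); ring.
  - apply Dn_S. intro g.
    replace (gpartial G g (fun h => f h + e h))
      with (fun h => gpartial G g f h + gpartial G g e h).
    + apply IHm; apply Dn_S; assumption.
    + apply functional_extensionality; intro; unfold gpartial; ring.
Qed.

Lemma Dn_opp (G : Group) m f : Dn G m f -> Dn G m (fun h => - f h).
Proof.
  revert f; induction m; intros f Hf.
  - apply Dn0. intro h. rewrite (proj1 (Dn0 G f) Hf); ring.
  - apply Dn_S. intro g.
    replace (gpartial G g (fun h => - f h))
      with (fun h => - gpartial G g f h).
    + apply IHm; apply Dn_S; assumption.
    + apply functional_extensionality; intro; unfold gpartial; ring.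
Qed.

Lemma Dn_T (G : Group) m f a : Dn G m f -> Dn G m (T G a f).
Proof.
  revert f a; induction m; intros f a Hf.
  - apply Dn0. intro h. unfold T. rewrite (proj1 (Dn0 G f) Hf); ring.
  - apply Dn_S. intro g.
    replace (gpartial G g (T G a f))
      with (T G a (gpartial G (gmul (gmul (ginv a) g) a) f)).
    + apply IHm; apply Dn_S; assumption.
    + apply functional_extensionality; intro; unfold gpartial, T; gsimp. reflexivity.
Qed.

Lemma Dn_mono (G : Group) m f : Dn G m f -> Dn G (S m) f.
Proof.
  intros H gs Hl h. destruct gs as [|a gs]; [discriminate|].
  simpl in Hl. simpl. unfold gpartial.
  rewrite (H gs ltac:(lia)), (H gs ltac:(lia)). ring.
Qed.

Lemma Dn_le (G : Group) m n f : (m <= n)%nat -> Dn G m f -> Dn G n f.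
Proof. induction 1; auto. intro; apply Dn_mono; auto. Qed.

Lemma Dn_pred (G : Group) m f a : Dn G m f -> Dn G (m - 1) (gpartial G a f).
Proof.
  destruct m.
  - intro H. simpl. apply Dn0. intro h. unfold gpartial.
    rewrite !(proj1 (Dn0 G f) H). ring.
  - intro H. replace (S m - 1)%nat with m by lia. apply Dn_S; auto.
Qed.

Lemma lower (G : Group) k : forall v, lcs G k v ->
  forall m f, Dn G (m + S k) f -> Dn G m (gpartial G v f).
Proof.
  induction k as [|k IH]; intros v Hv m f Hf.
  - replace (m + 1)%nat with (S m) in Hf by lia. apply Dn_S; auto.
  - revert m f Hf. simpl in Hv.
    apply (Hv (fun v => forall m f, Dn G (m + S (S k)) f -> Dn G m (gpartial G v f))).
    + split; [|split].
      * intros m f _.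
        replace (gpartial G gone f) with (fun _ : G => 0). apply Dn_zero.
        apply functional_extensionality; intro; unfold gpartial; gsimp; ring.
      * intros x y Hx Hy m f Hf.
        replace (gpartial G (gmul x y) f) with
          (fun h => T G x (gpartial G y f) h + gpartial G x f h).
        -- apply Dn_add; [apply Dn_T|]; auto.
        -- apply functional_extensionality; intro; unfold gpartial, T; gsimp; ring.
      * intros x Hx m f Hf.
        replace (gpartial G (ginv x) f) with
          (fun h => - T G (ginv x) (gpartial G x f) h).
        -- apply Dn_opp, Dn_T; auto.
        -- apply functional_extensionality; intro; unfold gpartial, T; gsimp; ring.
    + intros z [x [y [Hy ->]]] m f Hf.
      replace (gpartial G (gcomm G x y) f) with
        (T G (gmul (ginv x) (ginv y))
           (fun h => gpartial G x (gpartial G y f) h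
                     + - gpartial G y (gpartial G x f) h)).
      * apply Dn_T. apply Dn_add; [|apply Dn_opp].
        -- apply Dn_S. apply (IH y Hy (S m)).
           replace (S m + S k)%nat with (m + S (S k))%nat by lia. auto.
        -- apply (IH y Hy m).
           replace (m + S (S k))%nat with (S (m + S k)) in Hf by lia.
           apply Dn_S; auto.
      * apply functional_extensionality; intro; unfold gpartial, T, gcomm; gsimp; ring.
Qed.

Definition Hcar (G : Group) (d' : nat) := { p : (G -> R) * G | Dn G (S d') (fst p) }.

Definition Hmul (G : Group) d' (p q : Hcar G d') : Hcar G d' :=
  exist _ (fun h => fst (proj1_sig p) h + T G (snd (proj1_sig p)) (fst (proj1_sig q)) h,
           gmul (snd (proj1_sig p)) (snd (proj1_sig q)))
    (Dn_add G _ _ _ (proj2_sig p) (Dn_T G _ _ _ (proj2_sig q))).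

Definition Hinv (G : Group) d' (p : Hcar G d') : Hcar G d' :=
  exist _ (fun h => - T G (ginv (snd (proj1_sig p))) (fst (proj1_sig p)) h,
           ginv (snd (proj1_sig p)))
    (Dn_opp G _ _ (Dn_T G _ _ _ (proj2_sig p))).

Definition Hone (G : Group) d' : Hcar G d' := exist _ (fun _ => 0, gone) (Dn_zero G _).

Lemma Heq (G : Group) d' (p q : Hcar G d') :
  (forall h, fst (proj1_sig p) h = fst (proj1_sig q) h) ->
  snd (proj1_sig p) = snd (proj1_sig q) -> p = q.
Proof.
  destruct p as [[f a] Hp], q as [[e b] Hq]; simpl; intros E1 E2.
  assert (f = e) by (apply functional_extensionality; auto). subst.
  f_equal. apply proof_irrelevance.
Qed.

Lemma HmulA (G : Group) d' (x y z : Hcar G d') :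
  Hmul G d' x (Hmul G d' y z) = Hmul G d' (Hmul G d' x y) z.
Proof.
  apply Heq; simpl.
  - intro h. unfold T; gsimp. ring.
  - gsimp. reflexivity.
Qed.

Lemma Hmul1l (G : Group) d' (x : Hcar G d') : Hmul G d' (Hone G d') x = x.
Proof. apply Heq; simpl. - intro h. unfold T; gsimp. ring. - gsimp. reflexivity. Qed.

Lemma HmulVl (G : Group) d' (x : Hcar G d') : Hmul G d' (Hinv G d' x) x = Hone G d'.
Proof. apply Heq; simpl. - intro h. unfold T; gsimp. ring. - gsimp. reflexivity. Qed.

Definition HG (G : Group) d' : Group :=
  MkGroup (Hcar G d') (Hmul G d') (Hinv G d') (Hone G d')
    (HmulA G d') (Hmul1l G d') (HmulVl G d').

Lemma HG_lcs (G : Group) d' k : forall z : HG G d', lcs (HG G d') k z ->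
  lcs G k (snd (proj1_sig z)) /\ Dn G (S d' - k) (fst (proj1_sig z)).
Proof.
  induction k as [|k IH]; intros z Hz.
  - split; [exact I|]. rewrite Nat.sub_0_r. exact (proj2_sig z).
  - simpl in Hz. apply Hz.
    + split; [|split].
      * split. apply (lcs_subgroup G (S k)). apply Dn_zero.
      * intros x y [Hx1 Hx2] [Hy1 Hy2]. split.
        -- apply (lcs_subgroup G (S k)); auto.
        -- apply Dn_add; [|apply Dn_T]; auto.
      * intros x [Hx1 Hx2]. split.
        -- apply (lcs_subgroup G (S k)); auto.
        -- apply Dn_opp, Dn_T; auto.
    + intros w [x [y [Hy ->]]]. destruct (IH y Hy) as [Hy1 Hy2]. split.
      * change (lcs G (S k) (gcomm G (snd (proj1_sig x)) (snd (proj1_sig y)))).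
        intros S HS HA. apply HA. eauto.
      * destruct x as [[f a] Hf], y as [[e b] He]; simpl in *.
        replace (fun h : G => _) with
          (fun h => T G (ginv a) (gpartial G (ginv b) f) h
                    + T G (gmul (ginv a) (ginv b)) (gpartial G a e) h).
        -- apply Dn_add; apply Dn_T.
           ++ apply (lower G k (ginv b) (proj2 (proj2 (lcs_subgroup G k)) b Hy1)). apply (Dn_le G (S d')); auto. lia.
           ++ pose proof (Dn_pred G (S d' - k) e a Hy2) as HH.
              replace (S d' - k - 1)%nat with (S d' - S k)%nat in HH by lia.
              exact HH.
        -- apply functional_extensionality; intro; unfold gpartial, T; gsimp; ring.
Qed.

Lemma HG_nil (G : Group) d d' : (d' < d)%nat -> nilpotent_class_le G d ->
  nilpotent_class_le (HG G d') d.
Proof.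
  intros Hd Hn z Hz. destruct (HG_lcs G d' d z Hz) as [H1 H2].
  apply Heq.
  - replace (S d' - d)%nat with 0%nat in H2 by lia. apply Dn0; auto.
  - apply Hn; auto.
Qed.

Theorem lemma7p13 (G : Group) (d n : nat) (g : nat -> G)
  (Hfree : is_free_nilpotent G d n g)
  (d' : nat) (Hd' : (d' < d)%nat)
  (xis : nat -> G -> R)
  (Hxi : forall i, (i < n)%nat -> poly_deg_le G d' (xis i)) :
  exists xi : G -> R, poly_deg_le G (S d') xi /\
    forall i, (i < n)%nat -> forall h : G, gpartial G (g i) xi h = xis i h.
Proof.
  destruct Hfree as [Hnil [Hgen Huniv]].
  set (hmap := fun i : nat => match lt_dec i n with
     | left p => (exist _ (xis i, g i) (Hxi i p) : HG G d')
     | right _ => Hone G d' end).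
  destruct (Huniv (HG G d') (HG_nil G d d' Hd' Hnil) hmap) as [phi [Hhom Hphi]].
  set (s := fun x => snd (proj1_sig (phi x))).
  assert (Hs : is_hom G G s).
  { intros x y. unfold s. rewrite Hhom. reflexivity. }
  assert (Hsid : forall x, s x = x).
  { intro x. apply (Hgen x (fun x => s x = x)).
    - split; [|split].
      + apply hom_one; auto.
      + intros a b Ha Hb. rewrite Hs, Ha, Hb. reflexivity.
      + intros a Ha. rewrite hom_inv, Ha; auto.
    - intros y [i [Hi ->]]. unfold s. rewrite Hphi by auto.
      unfold hmap. destruct (lt_dec i n); [reflexivity|contradiction]. }
  set (c := fun a => fst (proj1_sig (phi a))).
  assert (Hc : forall a b x, c (gmul a b) x = c a x + c b (gmul (ginv a) x)).
  { intros a b x. unfold c. rewrite Hhom. simpl. unfold T.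
    fold (s a). rewrite Hsid. reflexivity. }
  set (xi := fun y => - c y y).
  assert (Hd : forall a x, gpartial G a xi x = c a x).
  { intros a x. unfold gpartial, xi.
    pose proof (Hc a (gmul (ginv a) x) x) as E.
    rewrite gmulA, mulVr, gmul1l in E. lra. }
  exists xi. split.
  - change (Dn G (S (S d')) xi). apply Dn_S. intro a.
    replace (gpartial G a xi) with (c a).
    + exact (proj2_sig (phi a)).
    + apply functional_extensionality; intro; rewrite Hd; reflexivity.
  - intros i Hi h. rewrite Hd. unfold c. rewrite Hphi by auto.
    unfold hmap. destruct (lt_dec i n); [reflexivity|contradiction].
Qed.
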